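(* The maximum-matching size $m(\cdot)$ and the minimum vertex-cover size $VC(\cdot)$, viewed as functions on graph streams, are both $2$-almost-smooth.
   Context: A graph stream is a sequence of edges of a simple graph on vertex set $V=[n]$ (no edge appears twice). For a stream segment $S$, $m(S)$ is the maximum size of a matching (set of pairwise vertex-disjoint edges) in the graph on $V$ whose edges are those of $S$, and $VC(S)$ is the minimum size of a vertex cover (set of vertices meeting every edge) of that graph. For disjoint consecutive segments $A,B$, $AB$ is their concatenation. A function $f$ is $2$-almost-smooth if: (1) $f(A)\ge0$ for all $A$; (2) $f(B)\le f(AB)$ for all disjoint segments $A,B$; (3) $f(A)\le\mathrm{poly}(n)$; (4) for all disjoint consecutive segments $A,B,C$ with $f(AB)\neq0$, $f(ABC)\neq0$, $\frac{f(B)}{f(AB)}\le 2\cdot\frac{f(BC)}{f(ABC)}$. *)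

(* Defs.v *)
From mathcomp Require Import all_boot all_order all_algebra.
Set Implicit Arguments. Unset Strict Implicit. Unset Printing Implicit Defensive.
Import Order.TTheory GRing.Theory Num.Theory.

(* Vertex set V = [n] is 'I_n; an edge of a simple graph is a 2-element
   subset of V; a stream segment is a sequence of edges. *)
Definition edge n := {set 'I_n}.

Definition is_stream n (S : seq (edge n)) : bool :=
  uniq S && all (fun e : {set 'I_n} => #|e| == 2) S.

Definition is_matching n (S : seq (edge n)) (M : {set {set 'I_n}}) : bool :=
  [forall e in M, e \in S] &&
  [forall e in M, forall f in M, (e != f) ==> [disjoint e & f]].

Definition is_vcover n (S : seq (edge n)) (C : {set 'I_n}) : bool :=
  all (fun e : {set 'I_n} => ~~ [disjoint e & C]) S.

Definition max_matching n (S : seq (edge n)) : nat :=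
  \max_(M : {set {set 'I_n}} | is_matching S M) #|M|.

(* VC(S): minimum size of a vertex cover (V itself is a cover of size n,
   so the initial value n of the min-fold does not affect the result). *)
Definition min_vcover n (S : seq (edge n)) : nat :=
  \big[minn/n]_(C : {set 'I_n} | is_vcover S C) #|C|.

Local Open Scope ring_scope.

Definition almost_smooth (beta : rat) (f : forall n, seq (edge n) -> rat) : Prop :=
  (forall n (A : seq (edge n)), is_stream A -> 0 <= f n A) /\
  (forall n (A B : seq (edge n)), is_stream (A ++ B) -> f n B <= f n (A ++ B)) /\
  (exists (c k : nat), forall n (A : seq (edge n)), is_stream A ->
       f n A <= (c * n ^ k + c)%:R) /\
  (forall n (A B C : seq (edge n)), is_stream (A ++ B ++ C) ->
       f n (A ++ B) != 0 -> f n (A ++ B ++ C) != 0 ->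
       f n B / f n (A ++ B) <= beta * (f n (B ++ C) / f n (A ++ B ++ C))).

(* Main.v *)
Require Import Defs.
From mathcomp Require Import all_boot all_order all_algebra.
From mathcomp Require Import zify.
Import Order.TTheory GRing.Theory Num.Theory.
Set Implicit Arguments. Unset Strict Implicit. Unset Printing Implicit Defensive.

Lemma arith (a b c d : nat) : (a <= b)%N -> (a <= c)%N -> (d <= b + c)%N ->
  b != 0%N -> d != 0%N ->
  ((a%:R : rat) / b%:R <= 2%:R * (c%:R / d%:R))%R.
Proof.
move=> ab ac dbc b0 d0.
have bp : (0 < (b%:R : rat))%R by rewrite ltr0n lt0n.
have dp : (0 < (d%:R : rat))%R by rewrite ltr0n lt0n.
rewrite mulrA ler_pdivrMr // mulrAC ler_pdivlMr //.
rewrite -!natrM ler_nat.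
have h1 : (a * d <= a * (b + c))%N by rewrite leq_mul2l dbc orbT.
have h2 : (a * b <= c * b)%N by rewrite leq_mul2r ac orbT.
have h3 : (a * c <= c * b)%N by rewrite mulnC leq_mul2l ab orbT.
rewrite mulnDr in h1. lia.
Qed.

Lemma smooth_of (f : forall n, seq (edge n) -> nat)
  (Hmono : forall n (S T : seq (edge n)), {subset S <= T} -> (f n S <= f n T)%N)
  (Hsub : forall n (S T : seq (edge n)), (f n (S ++ T) <= f n S + f n T)%N)
  (Hbound : forall n (S : seq (edge n)), (f n S <= n + 1)%N) :
  almost_smooth 2%:R (fun n S => (f n S)%:R)%R.
Proof.
split; first by move=> n A _; rewrite ler0n.
split.
  move=> n A B _; rewrite ler_nat; apply: Hmono => x; by rewrite mem_cat => ->; rewrite ?orbT.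
split.
  exists 1%N, 1%N => n A _; rewrite ler_nat mul1n expn1; exact: Hbound.
move=> n A B C _; rewrite !pnatr_eq0 => h1 h2; apply: arith => //.
- apply: Hmono => x; by rewrite mem_cat => ->; rewrite ?orbT.
- apply: Hmono => x; by rewrite mem_cat => ->; rewrite ?orbT.
- apply: leq_trans (Hsub _ (A ++ B) (B ++ C)); apply: Hmono => x.
  rewrite !mem_cat; by case: (x \in A); case: (x \in B); case: (x \in C).
Qed.

Lemma matching_sub n (S S' : seq (edge n)) (M M' : {set {set 'I_n}}) :
  is_matching S M -> M' \subset M -> {in M', forall e, e \in S'} ->
  is_matching S' M'.
Proof.
case/andP=> _ /forall_inP H2 sub hin; apply/andP; split.
  by apply/forall_inP => e /hin.
apply/forall_inP => e eM; apply/forall_inP => f fM.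
move/forall_inP: (H2 e (subsetP sub _ eM)); apply.
exact: subsetP sub _ fM.
Qed.

Lemma mm_ge n (S : seq (edge n)) M : is_matching S M -> (#|M| <= max_matching S)%N.
Proof. move=> h; exact: (leq_bigmax_cond (P := is_matching S)). Qed.

Lemma mm_ex n (S : seq (edge n)) : exists2 M, is_matching S M & max_matching S = #|M|.
Proof.
have h0 : is_matching S set0.
  by apply/andP; split; apply/forall_inP => e; rewrite in_set0.
have hp : (0 < #|is_matching S|)%N by apply/card_gt0P; exists set0.
have [M HM E] := @eq_bigmax_cond _ (is_matching S) (fun M => #|M|) hp.
by exists M.
Qed.

Lemma mm_mono n (S T : seq (edge n)) : {subset S <= T} ->
  (max_matching S <= max_matching T)%N.
Proof.
move=> st; have [M HM ->] := mm_ex S; apply: mm_ge.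
apply: (matching_sub HM (subxx _))  => e eM.
by apply: st; case/andP: HM => /forall_inP /(_ _ eM).
Qed.

Lemma mm_sub n (S T : seq (edge n)) :
  (max_matching (S ++ T) <= max_matching S + max_matching T)%N.
Proof.
have [M HM ->] := mm_ex (S ++ T).
set X := [set e | e \in S].
rewrite -(cardsID X M); apply: leq_add; apply: mm_ge.
  apply: (matching_sub HM (subsetIl _ _)) => e; by rewrite !inE => /andP[].
apply: (matching_sub HM (subsetDl _ _)) => e; rewrite !inE => /andP[eS eM].
case/andP: HM => /forall_inP /(_ _ eM); by rewrite mem_cat (negbTE eS).
Qed.

Lemma mm_bound n (S : seq (edge n)) : (max_matching S <= n + 1)%N.
Proof.
have [M HM ->] := mm_ex S.
pose g := fun e : {set 'I_n} => [pick x in e].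
rewrite -(card_in_imset (f := g) (D := mem M)).
  apply: leq_trans (max_card _) _; by rewrite card_option card_ord addn1.
move=> e f eM fM; rewrite /g.
case: pickP => [x xe|e0]; case: pickP => [y yf|f0] //.
- move=> [xy]; subst y; apply/eqP; apply: contraT => ef.
  case/andP: HM => _ /forall_inP /(_ _ eM) /forall_inP /(_ _ fM).
  rewrite ef /= => dj; by rewrite (disjointFr dj xe) in yf.
- move=> _; apply/setP => x; by rewrite (e0 x) (f0 x).
Qed.

Lemma vc_le n (S : seq (edge n)) C : is_vcover S C -> (min_vcover S <= #|C|)%N.
Proof.
move=> h; rewrite /min_vcover -big_filter.
have : C \in [seq i <- index_enum {set 'I_n} | is_vcover S i].
  by rewrite mem_filter h /index_enum -enumT mem_enum.
elim: [seq _ <- _ | _] => // x s IH; rewrite in_cons big_cons.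
case/orP=> [/eqP <-|/IH]; first exact: geq_minl.
by move/(leq_trans (geq_minr _ _)).
Qed.

Lemma vc_cases n (S : seq (edge n)) :
  min_vcover S = n \/ exists2 C, is_vcover S C & min_vcover S = #|C|.
Proof.
rewrite /min_vcover; apply: (big_ind (fun x => x = n \/ exists2 C, is_vcover S C & x = #|C|)).
- by left.
- by move=> x y hx hy; case: (leqP x y).
- by move=> C hC; right; exists C.
Qed.

Lemma vc_bound n (S : seq (edge n)) : (min_vcover S <= n)%N.
Proof.
case: (vc_cases S) => [->//|[C _ ->]]; apply: leq_trans (max_card _) _; by rewrite card_ord.
Qed.

Lemma vc_mono n (S T : seq (edge n)) : {subset S <= T} ->
  (min_vcover S <= min_vcover T)%N.
Proof.
move=> st; case: (vc_cases T) => [->|[C hC ->]]; first exact: vc_bound.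
apply: vc_le; apply/allP => e /st eT; exact: (allP hC).
Qed.

Lemma vc_sub n (S T : seq (edge n)) :
  (min_vcover (S ++ T) <= min_vcover S + min_vcover T)%N.
Proof.
case: (vc_cases S) => [->|[C1 h1 ->]].
  apply: leq_trans (vc_bound _) _; exact: leq_addr.
case: (vc_cases T) => [->|[C2 h2 ->]].
  apply: leq_trans (vc_bound _) _; exact: leq_addl.
apply: leq_trans (vc_le (C := C1 :|: C2) _) (leq_card_setU C1 C2).
apply/allP => e; rewrite mem_cat => /orP[eS|eT].
  move/allP: h1 => /(_ _ eS); apply: contra => dj.
  exact: disjointWr (subsetUl _ _) dj.
move/allP: h2 => /(_ _ eT); apply: contra => dj.
exact: disjointWr (subsetUr _ _) dj.
Qed.

Theorem corollary2p5 :
  almost_smooth (2%:R)%R (fun n (S : seq (edge n)) => ((max_matching S)%:R)%R) /\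
  almost_smooth (2%:R)%R (fun n (S : seq (edge n)) => ((min_vcover S)%:R)%R).
Proof.
split; apply: smooth_of.
- exact: mm_mono.
- exact: mm_sub.
- exact: mm_bound.
- exact: vc_mono.
- exact: vc_sub.
- move=> n S; apply: leq_trans (vc_bound S) _; exact: leq_addr.
Qed.
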